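(* Let $n\ge 1$, let $\mathcal{C}$ be a set of conditions, let $\varnothing\notin\mathcal{C}$ denote the null condition, fix $c\in\mathcal{C}$, let $N=2^m$ with $m\ge 1$ an integer, and set $d=1/N$. Let $s:\mathbb{R}^n\times[0,1]\times(\mathcal{C}\cup\{\varnothing\})\times(0,1]\to\mathbb{R}^n$ be any function, and for real $\omega$ define $g^{\omega}(x,t,c,\delta)=\omega\, s(x,t,c,\delta)+(1-\omega)\, s(x,t,\varnothing,\delta)$. Fix $w\in\mathbb{R}$ and points $y_0,\dots,y_N\in\mathbb{R}^n$, and assume that for every $j\in\{0,\dots,m-1\}$ and every index $i\in\{0,\dots,N-1\}$ that is a multiple of $2^{j+1}$, $$s\!\left(y_i,\tfrac{i}{N},c,2^{j+1}d\right)=\tfrac12\Big[g^{w}\!\left(y_i,\tfrac{i}{N},c,2^{j}d\right)+g^{w}\!\left(y_{i+2^j},\tfrac{i+2^j}{N},c,2^{j}d\right)\Big],$$ $$s\!\left(y_i,\tfrac{i}{N},\varnothing,2^{j+1}d\right)=\tfrac12\Big[s\!\left(y_i,\tfrac{i}{N},\varnothing,2^{j}d\right)+s\!\left(y_{i+2^j},\tfrac{i+2^j}{N},\varnothing,2^{j}d\right)\Big].$$ Then for every $j\in\{0,1,\dots,m\}$ and every index $i\in\{0,\dots,N-1\}$ that is a multiple of $2^{j}$: $$s\!\left(y_i,\tfrac{i}{N},\varnothing,2^{j}d\right)=\frac{1}{2^j}\sum_{l=0}^{2^j-1}s\!\left(y_{i+l},\tfrac{i+l}{N},\varnothing,d\right),$$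 and $$g^{w}\!\left(y_i,\tfrac{i}{N},c,2^{j}d\right)=\frac{1}{2^j}\sum_{l=0}^{2^j-1} g^{\,w^{j+1}}\!\left(y_{i+l},\tfrac{i+l}{N},c,d\right).$$
   Context: Here $s$ models a shortcut network (inputs: sample, time, condition or null condition $\varnothing$, step size) and $g^\omega$ its classifier-free-guided output with scale $\omega$, using the convention $g^\omega=\omega s(\cdot,c,\cdot)+(1-\omega)s(\cdot,\varnothing,\cdot)$. The hypotheses express exact self-consistency (zero self-consistency loss) at the given points: a step of size $2\delta$ equals the average of two consecutive steps of size $\delta$, guided with fixed scale $w$ for the conditional branch and unguided for the null-condition branch. In the paper the points are $y_0=x_0$, $y_{i+1}=y_i+s(y_i,i/N,c,d)\,d$. *)

(* Defs.v *)
From HB Require Import structures.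
From mathcomp Require Import all_boot all_order all_algebra.
From mathcomp Require Import reals.
Set Implicit Arguments. Unset Strict Implicit. Unset Printing Implicit Defensive.
Import Order.TTheory GRing.Theory Num.Theory.
Local Open Scope ring_scope.

(* Shortcut network s : R^n x time x (C ∪ {∅}) x step -> R^n.
   Conditions are [Some c] (c : C); the null condition ∅ is [None]. *)
Definition shortcut (R : realType) (n : nat) (C : Type) :=
  'rV[R]_n -> R -> option C -> R -> 'rV[R]_n.

Definition guided (R : realType) (n : nat) (C : Type) (s : shortcut R n C)
  (omega : R) (x : 'rV[R]_n) (t : R) (c : C) (delta : R) : 'rV[R]_n :=
  omega *: s x t (Some c) delta + (1 - omega) *: s x t None delta.

(* Main.v *)
Require Import Defs.
From HB Require Import structures.
From mathcomp Require Import all_boot all_order all_algebra.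
From mathcomp Require Import reals ring zify.
Import Order.TTheory GRing.Theory Num.Theory.
Local Open Scope ring_scope.

Lemma sum_split2 (V : zmodType) (j : nat) (F : nat -> V) :
  \sum_(l < (2 ^ j.+1)%N) F l = \sum_(l < (2 ^ j)%N) F l + \sum_(l < (2 ^ j)%N) F (2 ^ j + l)%N.
Proof.
have -> : (2 ^ j.+1 = 2 ^ j + 2 ^ j)%N by rewrite expnS mul2n addnn.
by rewrite big_split_ord.
Qed.

Lemma guidedM (R : realType) (n : nat) (C : Type) (s : shortcut R n C) w b x t c d :
  guided s (w * b) x t c d = w *: guided s b x t c d + (1 - w) *: s x t None d.
Proof.
rewrite /guided scalerDr !scalerA -addrA -scalerDl; congr (_ + _).
congr (_ *: _); ring.
Qed.

Lemma lin_aux (R : realType) (V : lmodType R) (w h a : R) (A B D E : V) :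
  w *: (h *: (a *: A + a *: B)) + (1 - w) *: (h *: (a *: D + a *: E)) =
  (h * a) *: ((w *: A + (1 - w) *: D) + (w *: B + (1 - w) *: E)).
Proof.
rewrite !scalerDr !scalerA addrACA; congr (_ + _ + (_ + _)); congr (_ *: _); ring.
Qed.

Theorem mainTheorem2 (R : realType) (n : nat) (C : Type) (c : C) (m : nat)
  (s : shortcut R n C) (w : R) (y : nat -> 'rV[R]_n) :
  (0 < n)%N -> (0 < m)%N ->
  (forall j i : nat, (j < m)%N -> (i < 2 ^ m)%N -> (2 ^ j.+1 %| i)%N ->
     s (y i) (i%:R / (2 ^ m)%:R) (Some c) ((2 ^ j.+1)%:R * (1 / (2 ^ m)%:R))
       = 2^-1 *: (guided s w (y i) (i%:R / (2 ^ m)%:R) c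
                    ((2 ^ j)%:R * (1 / (2 ^ m)%:R))
                  + guided s w (y (i + 2 ^ j)%N) ((i + 2 ^ j)%:R / (2 ^ m)%:R) c
                    ((2 ^ j)%:R * (1 / (2 ^ m)%:R)))
     /\
     s (y i) (i%:R / (2 ^ m)%:R) None ((2 ^ j.+1)%:R * (1 / (2 ^ m)%:R))
       = 2^-1 *: (s (y i) (i%:R / (2 ^ m)%:R) None
                    ((2 ^ j)%:R * (1 / (2 ^ m)%:R))
                  + s (y (i + 2 ^ j)%N) ((i + 2 ^ j)%:R / (2 ^ m)%:R) None
                    ((2 ^ j)%:R * (1 / (2 ^ m)%:R)))) ->
  forall j i : nat, (j <= m)%N -> (i < 2 ^ m)%N -> (2 ^ j %| i)%N ->
    s (y i) (i%:R / (2 ^ m)%:R) None ((2 ^ j)%:R * (1 / (2 ^ m)%:R))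
      = ((2 ^ j)%:R)^-1 *: \sum_(l < 2 ^ j)
            s (y (i + l)%N) ((i + l)%:R / (2 ^ m)%:R) None (1 / (2 ^ m)%:R)
    /\
    guided s w (y i) (i%:R / (2 ^ m)%:R) c ((2 ^ j)%:R * (1 / (2 ^ m)%:R))
      = ((2 ^ j)%:R)^-1 *: \sum_(l < 2 ^ j)
            guided s (w ^+ j.+1) (y (i + l)%N) ((i + l)%:R / (2 ^ m)%:R) c
              (1 / (2 ^ m)%:R).
Proof.
move=> _ _ H j; elim: j => [|j IH] i hj hi hd.
  by rewrite expn0 invr1 !scale1r !big_ord1 !addn0 expr1 !mul1r.
have [Hc Hn] := H j i hj hi hd.
have hd' : (2 ^ j %| i)%N by apply: dvdn_trans hd; rewrite expnS dvdn_mull.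
have hi' : (i + 2 ^ j < 2 ^ m)%N.
  have : (2 ^ j.+1 %| 2 ^ m)%N by rewrite dvdn_exp2l.
  move=> /dvdnP [q hq]; move: hi; rewrite hq.
  move: hd => /dvdnP [k ->].
  have hP : (0 < 2 ^ j)%N by rewrite expn_gt0.
  rewrite expnS; set P := (2 ^ j)%N; move: hP; clear; move=> hP hkq.
  have hkq' : (k < q)%N by rewrite ltn_pmul2r ?muln_gt0 in hkq.
  nia.
have hd2 : (2 ^ j %| i + 2 ^ j)%N by rewrite dvdn_addl.
have hj' : (j <= m)%N by apply: ltnW.
have [IHn1 IHc1] := IH i hj' hi hd'.
have [IHn2 IHc2] := IH (i + 2 ^ j)%N hj' hi' hd2.
have e2 : ((2 ^ j.+1)%:R : R)^-1 = 2^-1 * ((2 ^ j)%:R)^-1.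
  by rewrite expnS natrM invfM.
pose Fn := fun l : nat => s (y (i + l)%N) ((i + l)%:R / (2 ^ m)%:R) None (1 / (2 ^ m)%:R).
pose Fc := fun l : nat => guided s (w ^+ j.+2) (y (i + l)%N) ((i + l)%:R / (2 ^ m)%:R) c (1 / (2 ^ m)%:R).
rewrite (sum_split2 _ j Fn) (sum_split2 _ j Fc) e2 /Fn /Fc.
split.
  rewrite Hn IHn1 IHn2 scalerDr !scalerA [RHS]scalerDr; congr (_ + (_ *: _)).
  by apply: eq_bigr => l _; rewrite addnA.
under eq_bigr => l _ do rewrite exprS guidedM.
under [X in _ = _ *: (_ + X)]eq_bigr => l _ do rewrite exprS guidedM addnA.
rewrite {1}/guided Hc Hn IHn1 IHn2 IHc1 IHc2.
rewrite [in RHS]big_split [in RHS]big_split /= -!scaler_sumr.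
by apply: lin_aux.
Qed.
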